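(* Let $\mathcal X$ be a finite field, $A$ a full-rank $l\times n$ matrix over $\mathcal X$ (acting as $x\mapsto Ax$), and assume the index sets are ordered ($\mathcal I_1=\{1,\dots,l\}$, $\mathcal I_0=\{l+1,\dots,n\}$). Let $\Psi$ be the stochastic successive-cancellation (SSC) decoder. Then for every decoder $\phi:\mathcal X^l\times\mathcal Y^n\to\mathcal X^n$, $$\Pr\big(\Psi(A\mathbf X,\mathbf Y)\neq\mathbf X\big)\le 2\,\Pr\big(\phi(A\mathbf X,\mathbf Y)\neq\mathbf X\big),$$ where the left-hand probability is also over the internal randomness of $\Psi$. In particular, if $\Pr(\phi(A\mathbf X,\mathbf Y)\neq\mathbf X)=o(1)$, then $\Pr(\Psi(A\mathbf X,\mathbf Y)\neq\mathbf X)\to0$.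
   Context: $\mathcal Y$ is finite; $(\mathbf X,\mathbf Y)$ is a random pair on $\mathcal X^n\times\mathcal Y^n$. $B:\mathcal X^n\to\mathcal X^{n-l}$ is a map such that $T:\mathcal X^n\to\mathcal X^n$, $T(x)\equiv(Ax,Bx)$ (first the $l$ entries of $Ax$, then the $n-l$ entries of $Bx$), is a bijection. Notation: $c_i^j=(c_i,\dots,c_j)$. Extended codeword: $\mathbf C=(C_1,\dots,C_n)=T(\mathbf X)$. SSC decoder: given $(u,y)\in\mathcal X^l\times\mathcal Y^n$, set $\hat c_1^l=u$ and, for $i=l+1,\dots,n$ successively, draw $\hat c_i$ at random (independently of everything else given $\hat c_1^{i-1}$ and $y$) according to the conditional distribution $\mu_{C_i\mid C_1^{i-1}\mathbf Y}(\cdot\mid \hat c_1^{i-1},y)$ (with an arbitrary fixed distribution used when the conditioning event has probability zero). Then $\Psi(u,y)\equiv T^{-1}(\hat c)$. *)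

(* Defs.v *)
From HB Require Import structures.
From mathcomp Require Import all_boot all_order all_algebra all_field.
Set Implicit Arguments. Unset Strict Implicit. Unset Printing Implicit Defensive.
Import Order.TTheory GRing.Theory Num.Theory.
Local Open Scope ring_scope.

Section SSC.
Variables (R : realFieldType) (F : finFieldType) (Y : finType) (l m : nat).
(* n = l + m; vectors in X^n are column vectors 'cV[F]_(l+m) *)
Variable (A : 'M[F]_(l, l + m)) (B : 'cV[F]_(l + m) -> 'cV[F]_m).
(* joint pmf of (X, Y) *)
Variable (P : 'cV[F]_(l + m) -> 'cV[Y]_(l + m) -> R).
(* the arbitrary fixed distribution used when conditioning on a null event *)
Variable (d : F -> R).

Definition Tmap (x : 'cV[F]_(l + m)) : 'cV[F]_(l + m) := col_mx (A *m x) (B x).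

(* Pr(C_1^i = c_1^i, Y = y), where C = T(X) *)
Definition prefix_prob (i : nat) (c : 'cV[F]_(l + m)) (y : 'cV[Y]_(l + m)) : R :=
  \sum_(x : 'cV[F]_(l + m))
     P x y * (([forall j : 'I_(l + m), (j < i)%N ==> (Tmap x j 0 == c j 0)]) : bool)%:R.

(* mu_{C_i | C_1^{i-1} Y}(c_i | c_1^{i-1}, y) (index i is 0-based) *)
Definition cond_prob (i : 'I_(l + m)) (c : 'cV[F]_(l + m)) (y : 'cV[Y]_(l + m)) : R :=
  let den := prefix_prob i c y in
  if den == 0 then d (c i 0) else prefix_prob i.+1 c y / den.

(* probability that the SSC decoder, on input (u, y), produces hat c = c *)
Definition ssc_c_prob (u : 'cV[F]_l) (y : 'cV[Y]_(l + m)) (c : 'cV[F]_(l + m)) : R :=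
  (([forall j : 'I_l, c (lshift m j) 0 == u j 0]) : bool)%:R *
  \prod_(i : 'I_(l + m) | (l <= i)%N) cond_prob i c y.

(* Pr(Psi(u, y) = x') = Pr(T^{-1}(hat c) = x') = Pr(hat c = T x') *)
Definition Psi_prob (u : 'cV[F]_l) (y : 'cV[Y]_(l + m)) (x' : 'cV[F]_(l + m)) : R :=
  ssc_c_prob u y (Tmap x').

(* Pr(Psi(A X, Y) != X), including the internal randomness of Psi *)
Definition ssc_error : R :=
  \sum_(x : 'cV[F]_(l + m)) \sum_(y : 'cV[Y]_(l + m))
     P x y * \sum_(x' : 'cV[F]_(l + m) | x' != x) Psi_prob (A *m x) y x'.

Definition dec_error (phi : 'cV[F]_l -> 'cV[Y]_(l + m) -> 'cV[F]_(l + m)) : R :=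
  \sum_(x : 'cV[F]_(l + m)) \sum_(y : 'cV[Y]_(l + m))
     P x y * (phi (A *m x) y != x)%:R.
End SSC.

Definition is_pmf2 (R : realFieldType) (S T : finType) (P : S -> T -> R) : Prop :=
  (forall s t, 0 <= P s t) /\ \sum_(s : S) \sum_(t : T) P s t = 1.

Definition is_pmf (R : realFieldType) (S : finType) (d : S -> R) : Prop :=
  (forall s, 0 <= d s) /\ \sum_(s : S) d s = 1.

(* Main.v *)
Require Import Defs.
From HB Require Import structures.
From mathcomp Require Import all_boot all_order all_algebra all_field.
From mathcomp Require Import ring lra.
Import Order.TTheory GRing.Theory Num.Theory.
Local Open Scope ring_scope.
Set Implicit Arguments. Unset Strict Implicit. Unset Printing Implicit Defensive.

Section Chain.
Variables (R : realFieldType) (F : finFieldType) (n : nat).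

Definition agree (k : nat) (c c' : 'cV[F]_n) : bool :=
  [forall j : 'I_n, (j < k)%N ==> (c' j 0 == c j 0)].

Definition upd (c : 'cV[F]_n) (i : 'I_n) (v : F) : 'cV[F]_n :=
  \col_j (if j == i then v else c j 0).

Lemma agree_split (k : nat) (i0 : 'I_n) (c c' : 'cV[F]_n) :
  nat_of_ord i0 = k ->
  (agree k c c')%:R = \sum_(v : F) (agree k.+1 (upd c i0 v) c')%:R :> R.
Proof.
move=> hi0.
rewrite /agree (bigD1 (c' i0 0)) //= big1 ?addr0.
  congr ((nat_of_bool _)%:R); apply/idP/idP => /forallP H; apply/forallP => j.
  - rewrite /upd mxE; case: (eqVneq j i0) => [->|nji]; first by rewrite eqxx implybT.
    apply/implyP => hj; apply: (implyP (H j)).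
    have : nat_of_ord j != nat_of_ord i0 by [].
    rewrite hi0 => hne; by rewrite ltn_neqAle hne -ltnS.
  - apply/implyP => hj; have := implyP (H j) (ltnW hj); rewrite mxE.
    case: (eqVneq j i0) => [ej|//].
    by move: hj; rewrite ej hi0 ltnn.
move=> v hv; rewrite (_ : [forall _, _] = false) //.
apply/negbTE/negP => /forallP H; have := implyP (H i0); rewrite hi0 ltnSn mxE eqxx.
by move=> /(_ isT) /eqP e; rewrite e eqxx in hv.
Qed.

Lemma chain (f : 'I_n -> 'cV[F]_n -> R) :
  (forall (i : 'I_n) (c c' : 'cV[F]_n), (forall j : 'I_n, (j <= i)%N -> c j 0 = c' j 0) -> f i c = f i c') ->
  (forall i (c : 'cV[F]_n), \sum_(v : F) f i (upd c i v) = 1) ->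
  forall t k (c : 'cV[F]_n), (k + t = n)%N ->
  \sum_(c' : 'cV[F]_n) (agree k c c')%:R * \prod_(i : 'I_n | (k <= i)%N) f i c' = 1.
Proof.
move=> floc fsum; elim=> [|t IH] k c hkt.
- rewrite addn0 in hkt; subst k.
  have hp : forall c' : 'cV[F]_n, \prod_(i : 'I_n | (n <= i)%N) f i c' = 1.
    by move=> c'; rewrite big_pred0 // => i; rewrite /= leqNgt ltn_ord.
  under eq_bigr do rewrite hp mulr1.
  rewrite (bigD1 c) //= [X in _ + X]big1 ?addr0.
  + rewrite (_ : agree _ _ _ = true) //; apply/forallP => j; by rewrite eqxx implybT.
  + move=> c' nc'; rewrite (_ : agree _ _ _ = false) //.
    apply/negbTE; apply: contra nc' => /forallP H; apply/eqP/matrixP => i j.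
    rewrite (ord1 j); exact/eqP/(implyP (H i) (ltn_ord i)).
- have hk : (k < n)%N by rewrite -hkt addnS ltnS leq_addr.
  pose i0 := Ordinal hk.
  have hk1 : (k.+1 + t = n)%N by rewrite addSnnS.
  transitivity (\sum_c' \sum_v (agree k.+1 (upd c i0 v) c')%:R *
      (f i0 (upd c i0 v) * \prod_(i : 'I_n | (k.+1 <= i)%N) f i c')).
    apply eq_bigr => c' _; rewrite (@agree_split k i0) // mulr_suml; apply eq_bigr => v _.
    rewrite (bigD1 i0) /=; last exact: leqnn.
    case Ha: agree; last by rewrite !mul0r.
    congr (_ * (_ * _)).
    + apply floc => j hj; apply/eqP; exact (implyP (forallP Ha j) hj).
    + apply eq_bigl => i; rewrite ltn_neqAle andbC; congr (_ && _).
      by rewrite eq_sym -(inj_eq val_inj).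
  rewrite exchange_big /= -[RHS](fsum i0 c); apply eq_bigr => v _.
  under eq_bigr do rewrite mulrCA.
  by rewrite -mulr_sumr IH ?mulr1.
Qed.
End Chain.

Section SSCproof.
Variables (R : realFieldType) (F : finFieldType) (Y : finType) (l m : nat).
Variable (A : 'M[F]_(l, l + m)) (B : 'cV[F]_(l + m) -> 'cV[F]_m).
Variable (P : 'cV[F]_(l + m) -> 'cV[Y]_(l + m) -> R).
Variable (d : F -> R).
Hypothesis hT : bijective (Tmap A B).
Hypothesis hP0 : forall x y, 0 <= P x y.
Hypothesis hd : \sum_(s : F) d s = 1.

Local Notation T := (Tmap A B).
Local Notation pref := (prefix_prob A B P).
Local Notation cond := (cond_prob A B P d).

Lemma prefixE i c y : pref i c y = \sum_x P x y * (agree i c (T x))%:R.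
Proof. by []. Qed.

Lemma prefix_local i (c c' : 'cV[F]_(l+m)) y :
  (forall j : 'I_(l+m), (j < i)%N -> c j 0 = c' j 0) -> pref i c y = pref i c' y.
Proof.
move=> h; apply eq_bigr => x _; congr (_ * (nat_of_bool _)%:R); apply eq_forallb => j.
by case: (ltnP j i) => hj //=; rewrite h.
Qed.

Lemma cond_local (i : 'I_(l+m)) (c c' : 'cV[F]_(l+m)) y :
  (forall j : 'I_(l+m), (j <= i)%N -> c j 0 = c' j 0) -> cond i c y = cond i c' y.
Proof.
move=> h; rewrite /cond_prob /= (@prefix_local i c c') ?(@prefix_local i.+1 c c') ?h //.
by move=> j hj; apply h; apply ltnW.
Qed.

Lemma cond_sum (i : 'I_(l+m)) (c : 'cV[F]_(l+m)) y :
  \sum_(v : F) cond i (upd c i v) y = 1.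
Proof.
have hD v : pref i (upd c i v) y = pref i c y.
  apply prefix_local => j hj; rewrite mxE; case: eqP => // e.
  by rewrite e ltnn in hj.
rewrite /cond_prob /=; under eq_bigr do rewrite hD.
case: eqP => [_|hD0].
  by under eq_bigr do rewrite mxE eqxx.
rewrite -mulr_suml.
suff -> : \sum_v pref i.+1 (upd c i v) y = pref i c y by rewrite mulfV //; apply/eqP.
rewrite /prefix_prob exchange_big /=; apply eq_bigr => x _.
by rewrite -mulr_sumr (@agree_split R F (l+m) i i c (T x)).
Qed.

Lemma agree_mono i j (c c' : 'cV[F]_(l+m)) : (i <= j)%N -> agree j c c' -> agree i c c'.
Proof.
move=> hij /forallP H; apply/forallP => k; apply/implyP => hk.
exact: (implyP (H k) (leq_trans hk hij)).
Qed.

Lemma prefix_mono i j c y : (i <= j)%N -> pref j c y <= pref i c y.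
Proof.
move=> hij; rewrite !prefixE; apply ler_sum => x _; apply ler_wpM2l => //.
rewrite ler_nat; case Ha: (agree j c (T x)) => //.
by rewrite (agree_mono hij Ha).
Qed.

Lemma prefix_full x y : pref (l+m) (T x) y = P x y.
Proof.
rewrite prefixE (bigD1 x) //= big1 ?addr0.
  rewrite (_ : agree _ _ _ = true) ?mulr1 //; apply/forallP => j; by rewrite eqxx implybT.
move=> x' nx'; rewrite (_ : agree _ _ _ = false) ?mulr0 //.
apply/negbTE; apply: contra nx' => /forallP H.
apply/eqP; apply: (bij_inj hT); apply/matrixP => i j.
rewrite (ord1 j); exact/eqP/(implyP (H i) (ltn_ord i)).
Qed.

Lemma telesc (c : 'cV[F]_(l+m)) y : forall t k, (k + t = l+m)%N ->
  (forall i : nat, (k <= i)%N -> (i <= l+m)%N -> pref i c y != 0) ->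
  \prod_(i : 'I_(l+m) | (k <= i)%N) cond i c y = pref (l+m) c y / pref k c y.
Proof.
elim=> [|t IH] k hkt hnz.
- rewrite addn0 in hkt; subst k.
  rewrite big_pred0 ?mulfV ?hnz // => i; by rewrite /= leqNgt ltn_ord.
- have hk : (k < l+m)%N by rewrite -hkt addnS ltnS leq_addr.
  pose i0 := Ordinal hk.
  have hk1 : (k.+1 + t = l+m)%N by rewrite addSnnS.
  rewrite (bigD1 i0) /=; last exact: leqnn.
  rewrite (eq_bigl (fun i : 'I_(l+m) => (k.+1 <= i)%N)); last first.
    move=> i; rewrite ltn_neqAle andbC; congr (_ && _).
    by rewrite eq_sym -(inj_eq val_inj).
  rewrite IH //; last by move=> i hi hi'; apply hnz => //; apply ltnW.
  rewrite /cond_prob /= (negbTE (hnz k (leqnn k) (ltnW hk))).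
  rewrite mulrC mulrA divfK //; apply hnz => //.
Qed.

Lemma first_block x (c : 'cV[F]_(l+m)) :
  [forall j : 'I_l, c (lshift m j) 0 == (A *m x) j 0] = agree l (T x) c.
Proof.
apply/idP/idP => /forallP H; apply/forallP => j.
- apply/implyP => hj; have := H (Ordinal hj).
  have ej : lshift m (Ordinal hj) = j by apply/val_inj.
  move: (Ordinal hj) ej => j' <- e; by rewrite /Tmap col_mxEu.
- have := implyP (H (lshift m j)) (ltn_ord j).
  by rewrite /Tmap col_mxEu.
Qed.

Lemma sumQ x y : \sum_c ssc_c_prob A B P d (A *m x) y c = 1.
Proof.
rewrite /ssc_c_prob.
under eq_bigr do rewrite first_block.
exact: (chain (f := fun i c => cond i c y) (fun i c c' h => cond_local y h)
          (fun i c => cond_sum i c y) (t := m) (k := l) (T x) erefl).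
Qed.

Lemma Qval x y : 0 < P x y ->
  ssc_c_prob A B P d (A *m x) y (T x) = P x y / pref l (T x) y.
Proof.
move=> hp; rewrite /ssc_c_prob first_block.
rewrite (_ : agree _ _ _ = true) ?mul1r; last first.
  apply/forallP => j; by rewrite eqxx implybT.
rewrite (@telesc (T x) y m l) ?prefix_full // => i _ hi.
apply: lt0r_neq0; apply: (lt_le_trans hp); rewrite -prefix_full.
exact: prefix_mono.
Qed.

Lemma agree_A x x' : agree l (T x) (T x') -> A *m x' = A *m x.
Proof.
move/forallP=> H; apply/matrixP => i j; rewrite (ord1 j).
have := implyP (H (lshift m i)) (ltn_ord i); rewrite /Tmap !col_mxEu.
by move/eqP.
Qed.


Variable phi : 'cV[F]_l -> 'cV[Y]_(l + m) -> 'cV[F]_(l + m).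

Lemma pointwise x y :
  P x y * (1 - ssc_c_prob A B P d (A *m x) y (T x)) <=
  P x y * (phi (A *m x) y != x)%:R + (phi (A *m x) y == x)%:R * (pref l (T x) y - P x y).
Proof.
have hpS : P x y <= pref l (T x) y by rewrite -prefix_full; apply prefix_mono; exact: leq_addr.
have hp0 := hP0 x y.
case: (eqVneq (P x y) 0) => [p0 | pn0].
  rewrite p0 !mul0r add0r subr0; apply mulr_ge0; first exact: ler0n.
  by rewrite -p0.
have hpp : 0 < P x y by rewrite lt_def pn0 hp0.
have hS : 0 < pref l (T x) y := lt_le_trans hpp hpS.
rewrite Qval //.
have hq0 : 0 <= P x y / pref l (T x) y by apply divr_ge0 => //; exact: ltW.
have hq1 : P x y / pref l (T x) y <= 1 by rewrite ler_pdivrMr // mul1r.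
have hqS : P x y / pref l (T x) y * pref l (T x) y = P x y by rewrite divfK // lt0r_neq0.
move: hq0 hq1 hqS hpS hp0.
set q := P x y / _; set S := pref l _ y; set p := P x y => hq0 hq1 hqS hpS hp0'.
case: (phi (A *m x) y == x) => /=; rewrite ?mulr0 ?mulr1 ?mul1r ?mul0r ?addr0 ?add0r; nra.
Qed.

Lemma step3 y :
  \sum_x (phi (A *m x) y == x)%:R * (pref l (T x) y - P x y) <=
  \sum_x P x y * (phi (A *m x) y != x)%:R.
Proof.
pose W x' := P x' y * (phi (A *m x') y != x')%:R.
have hW x' : 0 <= W x' by apply mulr_ge0 => //; exact: ler0n.
have e1 x : (phi (A *m x) y == x)%:R * (pref l (T x) y - P x y) <=
    \sum_x' ((phi (A *m x) y == x) && agree l (T x) (T x'))%:R * W x'.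
  rewrite prefixE (bigD1 x) //=.
  rewrite (_ : agree l (T x) (T x) = true); last first.
    apply/forallP => j; by rewrite eqxx implybT.
  rewrite mulr1 addrAC subrr add0r [X in _ <= X](bigD1 x) //=.
  apply ler_wpDl; first by apply mulr_ge0 => //; exact: ler0n.
  rewrite mulr_sumr; apply ler_sum => x' hx'.
  case eP: (phi (A *m x) y == x); case ea: (agree l (T x) (T x')) => /=;
    rewrite ?mul0r ?mulr0 ?mul1r ?mulr1 //.
  rewrite /W (_ : (phi (A *m x') y != x') = true) ?mulr1 //.
  rewrite (agree_A ea) (eqP eP) eq_sym; exact: hx'.
apply: (le_trans (ler_sum _ (fun x _ => e1 x))).
rewrite exchange_big /=; apply ler_sum => x' _.
rewrite -mulr_suml; apply ler_piMl; first exact: hW.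
case: (pickP [pred x | (phi (A *m x) y == x) && agree l (T x) (T x')]) => [x1 hx1|none].
  rewrite (bigD1 x1) //= (_ : (_ && _) = true) // big1 ?addr0 // => x hx.
  case hb: (_ && _) => //; exfalso.
  move: hx1 hb => /andP [/eqP h1 a1] /andP [/eqP h2 a2].
  have exx : x = x1 by rewrite -h2 -(agree_A a2) (agree_A a1) h1.
  by rewrite exx eqxx in hx.
rewrite big1 // => x _; by have /= -> := none x.
Qed.

End SSCproof.

Theorem theorem3 (R : realFieldType) (F : finFieldType) (Y : finType) (l m : nat)
  (A : 'M[F]_(l, l + m)) (B : 'cV[F]_(l + m) -> 'cV[F]_m)
  (P : 'cV[F]_(l + m) -> 'cV[Y]_(l + m) -> R) (d : F -> R)
  (hA : \rank A = l)
  (hT : bijective (Tmap A B))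
  (hP : is_pmf2 P) (hd : is_pmf d)
  (phi : 'cV[F]_l -> 'cV[Y]_(l + m) -> 'cV[F]_(l + m)) :
  ssc_error A B P d <= 2 * dec_error A P phi.
Proof.
have hP0 := hP.1.
have hd1 := hd.2.
have eQ x y : \sum_(x' | x' != x) Psi_prob A B P d (A *m x) y x' =
    1 - ssc_c_prob A B P d (A *m x) y (Tmap A B x).
  have := sumQ A B P hd1 x y; rewrite (reindex (Tmap A B)) /=; last exact: onW_bij.
  rewrite (bigD1 x) //= => <-; rewrite addrAC subrr add0r //.
rewrite /ssc_error.
apply: (le_trans (y := \sum_x \sum_y (P x y * (phi (A *m x) y != x)%:R +
   (phi (A *m x) y == x)%:R * (prefix_prob A B P l (Tmap A B x) y - P x y)))).
  apply ler_sum => x _; apply ler_sum => y _; rewrite eQ; exact: (pointwise d hT hP0).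
under eq_bigr do rewrite big_split /=.
rewrite big_split /= /dec_error.
rewrite (_ : 2 * _ = \sum_x \sum_y P x y * (phi (A *m x) y != x)%:R +
                     \sum_x \sum_y P x y * (phi (A *m x) y != x)%:R); last by ring.
rewrite lerD2l exchange_big [X in _ <= X]exchange_big /=.
apply ler_sum => y _; exact: (step3 A B hP0).
Qed.
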